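(* Let $n\ge2$ and $p,u,v\in\mathbb R^{n-1}$, and let $P:\mathbb R^n\to\mathbb R^{n-1}$ be the projection onto the first $n-1$ coordinates. Then there exist $a,b\in\mathbb R^n$ such that the lens $L=B(a,1)\cap B(b,1)$ can be written as $L=\{(x,z): x\in P(L),\ f(x)\le z\le g(x)\}$ for a convex function $f$ and a concave function $g$ on $P(L)$, with $p$ in the interior of $P(L)$, $f,g$ differentiable at $p$, $\nabla f(p)=u$ and $\nabla g(p)=v$.
   Context: For $a\in\mathbb R^n$, $B(a,1)$ is the closed Euclidean unit ball centered at $a$. A lens is an intersection of two closed Euclidean unit balls. *)

(* Defs.v *)
From HB Require Import structures.
From mathcomp Require Import all_boot all_order all_algebra.
From mathcomp Require Import all_classical all_reals all_analysis.
Set Implicit Arguments. Unset Strict Implicit. Unset Printing Implicit Defensive.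
Import Order.TTheory GRing.Theory Num.Theory.
Import numFieldNormedType.Exports.
Local Open Scope classical_set_scope.
Local Open Scope ring_scope.

Definition dotv (R : realType) (k : nat) (x y : 'rV[R]_k) : R :=
  \sum_(i < k) x 0 i * y 0 i.

Definition eball1 (R : realType) (k : nat) (a : 'rV[R]_k) : set 'rV[R]_k :=
  [set x | \sum_(i < k) (x 0 i - a 0 i) ^+ 2 <= 1].

Definition lens (R : realType) (k : nat) (a b : 'rV[R]_k) : set 'rV[R]_k :=
  eball1 a `&` eball1 b.

Definition convex_on (R : realType) (k : nat) (S : set 'rV[R]_k) (f : 'rV[R]_k -> R) :=
  forall x y t, S x -> S y -> 0 <= t <= 1 ->
    f (t *: x + (1 - t) *: y) <= t * f x + (1 - t) * f y.

Definition concave_on (R : realType) (k : nat) (S : set 'rV[R]_k) (f : 'rV[R]_k -> R) :=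
  forall x y t, S x -> S y -> 0 <= t <= 1 ->
    t * f x + (1 - t) * f y <= f (t *: x + (1 - t) *: y).

(* Main.v *)
Require Import Defs.
From HB Require Import structures.
From mathcomp Require Import all_boot all_order all_algebra.
From mathcomp Require Import all_classical all_reals all_analysis.
Import Order.TTheory GRing.Theory Num.Theory.
Import numFieldNormedType.Exports.
Local Open Scope classical_set_scope.
Local Open Scope ring_scope.
Set Implicit Arguments. Unset Strict Implicit. Unset Printing Implicit Defensive.

Definition sq (R : realType) (m : nat) (c x : 'rV[R]_m) : R :=
  \sum_(i < m) (x 0 i - c 0 i) ^+ 2.
Definition sr (R : realType) (m : nat) (c x : 'rV[R]_m) : R :=
  Num.sqrt (1 - sq c x).

Lemma is_diff_coord (R : realType) (m : nat) (p : 'rV[R]_m) (i : 'I_m) :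
  is_diff p (fun x : 'rV[R]_m => x 0 i) (fun x : 'rV[R]_m => x 0 i).
Proof.
have @f : {linear 'rV[R]_m -> R}.
  by exists (fun N : 'rV[R]_m => N 0 i); do 2![eexists]; do ?[constructor];
     rewrite ?mxE// => ? *; rewrite ?mxE//; move=> ?; rewrite !mxE.
apply: DiffDef; first exact: differentiable_coord.
rewrite (_ : (fun _ => _) = f) //; apply: diff_lin; exact: coord_continuous.
Qed.

Lemma is_diff_sumR (R : realType) (V : normedModType R) n (h : 'I_n -> V -> R)
  (dh : 'I_n -> V -> R) x : (forall i, is_diff x (h i) (dh i)) ->
  is_diff x (\sum_(i < n) h i) (\sum_(i < n) dh i).
Proof.
by move=> H; elim/big_ind2 : _ => // [|] *; [exact: is_diff_cst|exact: is_diffD].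
Qed.

Lemma is_diff_sq (R : realType) (m : nat) (c p : 'rV[R]_m) :
  is_diff p (sq c) (fun h => 2 * dotv (p - c) h).
Proof.
have H : forall i : 'I_m, is_diff p (fun x : 'rV[R]_m => (x 0 i - c 0 i) ^+ 2)
   (fun h => 2 * (p 0 i - c 0 i) * h 0 i).
  move=> i.
  have h1 := is_diff_coord p i.
  have h2 : is_diff p ((fun x : 'rV[R]_m => x 0 i) - cst (c 0 i))
      ((fun x : 'rV[R]_m => x 0 i) - 0) by exact: is_diffB.
  have h3 := @is_diffX _ _ _ _ 1 _ h2.
  have e1 : ((fun x : 'rV[R]_m => x 0 i) - cst (c 0 i)) ^+ 2 =
     (fun x : 'rV[R]_m => (x 0 i - c 0 i) ^+ 2).
    by apply/funext => x; rewrite /= !expr2.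
  rewrite -e1; apply: is_diff_eq h3 _; apply/funext => h /=.
  by rewrite expr1 subr0 mulr_natl.
have := is_diff_sumR H.
have e2 : \sum_(i < m) (fun x : 'rV[R]_m => (x 0 i - c 0 i) ^+ 2) = sq c.
  by rewrite fct_sumE; apply/funext => x.
rewrite e2 => H2; apply: is_diff_eq H2 _; rewrite fct_sumE; apply/funext => h.
rewrite /dotv mulr_sumr; apply: eq_bigr => i _; rewrite !mxE mulrA.
by [].
Qed.

Lemma is_diff_sqrt (R : realType) (y : R) : 0 < y ->
  is_diff y (@Num.sqrt R) (fun t => t * (2 * Num.sqrt y)^-1).
Proof.
move=> y0.
have hd : is_derive y 1 (@Num.sqrt R) (2 * Num.sqrt y)^-1 := is_derive1_sqrt y0.
have der : derivable (@Num.sqrt R) y 1 by case: hd.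
apply: DiffDef; first exact/derivable1_diffP.
rewrite deriv1E // derive1E derive_sqrt //.
Qed.

Lemma is_diff_sr (R : realType) (m : nat) (c p : 'rV[R]_m) : sq c p < 1 ->
  is_diff p (sr c) (fun h => - dotv (p - c) h / sr c p).
Proof.
move=> hp.
have h1 : is_diff p (cst 1 - sq c) (0 - (fun h => 2 * dotv (p - c) h)).
  have := (is_diffB (is_diff_cst (1:R) p) (is_diff_sq c p)).
  by [].
have y0 : 0 < (cst 1 - sq c) p by rewrite /= subr_gt0.
have h2 := is_diff_sqrt y0.
have h3 := is_diff_comp h1 h2.
have e : Num.sqrt \o (cst 1 - sq c) = sr c by apply/funext => x.
rewrite -e; apply: is_diff_eq h3 _; apply/funext => h /=.
rewrite /sr /= sub0r.
rewrite -[(- _) h]/(- (2 * dotv (p - c) h)) !mulNr; congr (- _).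
by rewrite invfM mulrACA mulfV ?mul1r.
Qed.

Lemma near_is_diff (R : realType) (V : normedModType R) (f g dg : V -> R) (p : V) :
  is_diff p g dg -> (\forall x \near p, f x = g x) -> is_diff p f dg.
Proof.
move=> hg hn.
have dgp : differentiable g p by [].
have fp : f p = g p := nbhs_singleton hn.
have key : f \o shift p = cst (f p) + 'd g p +o_ 0 id.
  apply/eqaddoP => eps e0.
  have := diff_locally dgp; move/eqaddoP => Hg.
  have hn0 := (nbhs0P _ _).1 hn.
  move: (Hg eps e0) hn0; apply: filterS2 => x h1 h2.
  have -> : (f \o shift p - (cst (f p) + 'd g p)) x =
            (g \o shift p - (cst (g p) + 'd g p)) x.
    by rewrite /= fp; congr (_ - _); rewrite /= addrC.
  exact: h1.
have dfe : 'd f p = 'd g p :> (V -> R).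
  by apply: diff_unique => //; exact: diff_continuous.
apply: DiffDef; last by rewrite dfe diff_val.
by apply/diff_locallyP; rewrite dfe; split => //; exact: diff_continuous.
Qed.

From mathcomp Require Import ring lra.

Lemma ball_real (R : realType) (z al q : R) :
  (z - al) ^+ 2 + q <= 1 <-> q <= 1 /\ al - Num.sqrt (1 - q) <= z <= al + Num.sqrt (1 - q).
Proof.
split.
- move=> H.
  have q1 : 0 <= 1 - q by have := sqr_ge0 (z - al); lra.
  split; first lra.
  rewrite -ler_distl -sqrtr_sqr ler_sqrt //; nra.
- move=> [q1 /andP[H1 H2]].
  have s0 := sqrtr_ge0 (1 - q).
  have s2 : Num.sqrt (1 - q) ^+ 2 = 1 - q by rewrite sqr_sqrtr // subr_ge0.
  move: s2; set s := Num.sqrt (1 - q) => s2.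
  have P : 0 <= (al + s - z) * (z - (al - s)) by apply: mulr_ge0; rewrite subr_ge0.
  rewrite !expr2 in s2 *; nra.
Qed.

Lemma sum_split (R : realType) (m : nat) (y A : 'rV[R]_(m + 1)) :
  \sum_(i < m + 1) (y 0 i - A 0 i) ^+ 2 =
  sq (lsubmx A) (lsubmx y) + (rsubmx y 0 0 - rsubmx A 0 0) ^+ 2.
Proof.
rewrite big_split_ord /= big_ord1; congr (_ + _).
  by apply: eq_bigr => i _; rewrite !mxE.
by rewrite !mxE.
Qed.

Lemma ballE (R : realType) (m : nat) (c : 'rV[R]_m) (al : R) (y : 'rV[R]_(m + 1)) :
  eball1 (row_mx c (const_mx al : 'M[R]_(1, 1))) y <->
  sq c (lsubmx y) <= 1 /\
  al - sr c (lsubmx y) <= rsubmx y 0 0 <= al + sr c (lsubmx y).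
Proof.
rewrite /eball1 /= sum_split row_mxKl row_mxKr mxE addrC.
rewrite !mxE; exact: ball_real.
Qed.

Lemma ball_convex (R : realType) (k : nat) (a y1 y2 : 'rV[R]_k) (t : R) :
  eball1 a y1 -> eball1 a y2 -> 0 <= t <= 1 ->
  eball1 a (t *: y1 + (1 - t) *: y2).
Proof.
rewrite /eball1 /= => H1 H2 /andP[t0 t1].
apply: le_trans (_ : t * \sum_(i < k) (y1 0 i - a 0 i) ^+ 2 +
   (1 - t) * \sum_(i < k) (y2 0 i - a 0 i) ^+ 2 <= 1); last first.
  have : t * \sum_(i < k) (y1 0 i - a 0 i) ^+ 2 <= t * 1 by rewrite ler_wpM2l.
  have : (1 - t) * \sum_(i < k) (y2 0 i - a 0 i) ^+ 2 <= (1 - t) * 1.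
    by rewrite ler_wpM2l // subr_ge0.
  lra.
rewrite !mulr_sumr -big_split /=; apply: ler_sum => i _.
rewrite !mxE.
set d := y1 0 i - a 0 i; set e := y2 0 i - a 0 i.
have -> : t * y1 0 i + (1 - t) * y2 0 i - a 0 i = t * d + (1 - t) * e.
  by rewrite /d /e; ring.
have P : 0 <= t * (1 - t) * (d - e) ^+ 2.
  by apply: mulr_ge0; [apply: mulr_ge0; rewrite ?subr_ge0 | exact: sqr_ge0].
rewrite !expr2 in P *; nra.
Qed.

Lemma lens_convex (R : realType) (k : nat) (a b y1 y2 : 'rV[R]_k) (t : R) :
  lens a b y1 -> lens a b y2 -> 0 <= t <= 1 ->
  lens a b (t *: y1 + (1 - t) *: y2).
Proof.
by move=> [Ha1 Hb1] [Ha2 Hb2] ht; split; apply: ball_convex.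
Qed.

Lemma conv_lemma (R : realType) (m : nat) (L : set 'rV[R]_(m + 1))
  (f g : 'rV[R]_m -> R) :
  (forall y1 y2 t, L y1 -> L y2 -> 0 <= t <= 1 -> L (t *: y1 + (1 - t) *: y2)) ->
  L = [set y | ((@lsubmx R 1 m 1) @` L) (lsubmx y) /\
                 f (lsubmx y) <= (rsubmx y) 0 0 <= g (lsubmx y)] ->
  convex_on ((@lsubmx R 1 m 1) @` L) f /\ concave_on ((@lsubmx R 1 m 1) @` L) g.
Proof.
move=> Lc LE.
set PL := (@lsubmx R 1 m 1) @` L.
have fg : forall x, PL x -> f x <= g x.
  move=> x [y Ly <-]; move: Ly; rewrite {1}LE => -[_ /andP[h1 h2]].
  exact: le_trans h2.
pose mk (x : 'rV[R]_m) (z : R) : 'rV[R]_(m + 1) := row_mx x (const_mx z).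
have mkl : forall x z, lsubmx (mk x z) = x by move=> x z; rewrite row_mxKl.
have mkr : forall x z, rsubmx (mk x z) 0 0 = z by move=> x z; rewrite row_mxKr mxE.
have inL : forall x z, PL x -> f x <= z <= g x -> L (mk x z).
  by move=> x z Px hz; rewrite LE /= mkl mkr; split.
have comb : forall x1 x2 z1 z2 t,
    t *: mk x1 z1 + (1 - t) *: mk x2 z2 = mk (t *: x1 + (1 - t) *: x2) (t * z1 + (1 - t) * z2).
  move=> x1 x2 z1 z2 t; rewrite /mk !scale_row_mx add_row_mx; congr row_mx.
  by apply/matrixP => i j; rewrite !mxE.
split.
- move=> x1 x2 t P1 P2 ht.
  have h1 : f x1 <= f x1 <= g x1 by rewrite lexx fg.
  have h2 : f x2 <= f x2 <= g x2 by rewrite lexx fg.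
  have := Lc _ _ t (inL x1 (f x1) P1 h1) (inL x2 (f x2) P2 h2) ht.
  by rewrite comb {1}LE /= mkl mkr => -[_ /andP[]].
- move=> x1 x2 t P1 P2 ht.
  have h1 : f x1 <= g x1 <= g x1 by rewrite lexx fg.
  have h2 : f x2 <= g x2 <= g x2 by rewrite lexx fg.
  have := Lc _ _ t (inL x1 (g x1) P1 h1) (inL x2 (g x2) P2 h2) ht.
  by rewrite comb {1}LE /= mkl mkr => -[_ /andP[]].
Qed.

Lemma dotvZ (R : realType) (m : nat) (k : R) (w h : 'rV[R]_m) :
  dotv (k *: w) h = k * dotv w h.
Proof. by rewrite /dotv mulr_sumr; apply: eq_bigr => i _; rewrite mxE mulrA. Qed.

Lemma dotv_ge0 (R : realType) (m : nat) (w : 'rV[R]_m) : 0 <= dotv w w.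
Proof. by apply: sumr_ge0 => i _; rewrite -expr2 sqr_ge0. Qed.

Lemma sq_dot (R : realType) (m : nat) (c x : 'rV[R]_m) : sq c x = dotv (x - c) (x - c).
Proof. by apply: eq_bigr => i _; rewrite !mxE expr2. Qed.

Lemma sq_at (R : realType) (m : nat) (w c p : 'rV[R]_m) :
  p - c = (Num.sqrt (1 + dotv w w))^-1 *: w ->
  sq c p < 1 /\ sr c p = (Num.sqrt (1 + dotv w w))^-1.
Proof.
move=> e.
have d0 := dotv_ge0 w.
set d := dotv w w in d0 e *.
have d1 : 0 < 1 + d by lra.
set S := Num.sqrt (1 + d) in e *.
have S0 : 0 < S by rewrite sqrtr_gt0.
have S2 : S ^+ 2 = 1 + d by rewrite sqr_sqrtr // ltW.
have sqE : sq c p = d / (1 + d).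
  rewrite sq_dot e dotvZ /dotv.
  have -> : \sum_(i < m) w 0 i * ((S^-1 *: w) 0 i) = S^-1 * d.
    by rewrite /d /dotv mulr_sumr; apply: eq_bigr => i _; rewrite mxE mulrCA.
  by rewrite mulrA -expr2 exprVn S2 mulrC.
have oneE : 1 - sq c p = (S^-1) ^+ 2.
  rewrite sqE exprVn S2; field; lra.
split.
  by rewrite sqE ltr_pdivrMr // mul1r; lra.
by rewrite /sr oneE sqrtr_sqr ger0_norm // invr_ge0 ltW.
Qed.

Lemma dotvN (R : realType) (m : nat) (w h : 'rV[R]_m) : dotv (- w) h = - dotv w h.
Proof. by rewrite -scaleN1r dotvZ mulN1r. Qed.

Unset Implicit Arguments.

Theorem lemma4p6 (R : realType) (m : nat) (hm : (1 <= m)%N) (p u v : 'rV[R]_m) :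
  exists (a b : 'rV[R]_(m + 1)) (f g : 'rV[R]_m -> R),
    let L := lens a b in
    let PL := (@lsubmx R 1 m 1) @` L in
    L = [set y | PL (lsubmx y) /\
                 f (lsubmx y) <= (rsubmx y) 0 0 <= g (lsubmx y)] /\
    convex_on PL f /\ concave_on PL g /\
    interior PL p /\
    differentiable f p /\ differentiable g p /\
    (forall h, 'd f p h = dotv u h) /\ (forall h, 'd g p h = dotv v h).
Proof.
set A := Num.sqrt (1 + dotv u u).
set B := Num.sqrt (1 + dotv (- v) (- v)).
pose ca := p - A^-1 *: u.
pose cb := p - B^-1 *: (- v).
have ea : p - ca = A^-1 *: u by rewrite /ca opprB addrC subrK.
have eb : p - cb = B^-1 *: (- v) by rewrite /cb opprB addrC subrK.
have [qa sa] := sq_at ea.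
have [qb sb] := sq_at eb.
rewrite -/A in sa; rewrite -/B in sb.
have A0 : 0 < A^-1 by rewrite invr_gt0 sqrtr_gt0; have := dotv_ge0 u; lra.
have B0 : 0 < B^-1 by rewrite invr_gt0 sqrtr_gt0; have := dotv_ge0 (- v); lra.
pose al := Num.max A^-1 B^-1.
have alA : A^-1 <= al by rewrite le_max lexx.
have alB : B^-1 <= al by rewrite le_max lexx orbT.
have alS : al < A^-1 + B^-1 by rewrite gt_max; apply/andP; split; lra.
pose f := fun x => Num.max (al - sr ca x) (0 - sr cb x).
pose g := fun x => Num.min (al + sr ca x) (0 + sr cb x).
exists (row_mx ca (const_mx al)), (row_mx cb (const_mx 0)), f, g.
move=> L PL.
have LE : L = [set y | PL (lsubmx y) /\
                 f (lsubmx y) <= (rsubmx y) 0 0 <= g (lsubmx y)].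
  apply/seteqP; split=> y.
  - move=> Ly; split; first by exists y.
    move: Ly => [/ballE [qa' /andP[a1 a2]] /ballE [qb' /andP[b1 b2]]].
    by rewrite /f /g ge_max le_min a1 b1 a2 b2.
  - move=> [[y' [/ballE [qa' _] /ballE [qb' _]] ey] /andP[hf hg]].
    rewrite ey in qa' qb'.
    move: hf hg; rewrite /f /g ge_max le_min => /andP[a1 b1] /andP[a2 b2].
    by split; apply/ballE; rewrite ?a1 ?a2 ?b1 ?b2.
have [cvf ccg] : convex_on PL f /\ concave_on PL g.
  apply: conv_lemma => //; move=> y1 y2 t; exact: lens_convex.
have Dsa := is_diff_sr qa.
have Dsb := is_diff_sr qb.
have Ca : {for p, continuous (sr ca)} by apply: differentiable_continuous.
have Cb : {for p, continuous (sr cb)} by apply: differentiable_continuous.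
have Qa : {for p, continuous (sq ca)}.
  by apply: differentiable_continuous; apply: (@ex_diff _ _ _ _ _ _ _ (is_diff_sq ca p)).
have Qb : {for p, continuous (sq cb)}.
  by apply: differentiable_continuous; apply: (@ex_diff _ _ _ _ _ _ _ (is_diff_sq cb p)).
have N1 : \forall x \near p, sq ca x < 1 := cvgr_lt _ Qa _ qa.
have N2 : \forall x \near p, sq cb x < 1 := cvgr_lt _ Qb _ qb.
have K3 : {for p, continuous (cst al - sr ca + sr cb)}.
  by apply: differentiable_continuous.
have K4 : {for p, continuous (cst al + sr ca - sr cb)}.
  by apply: differentiable_continuous.
have K5 : {for p, continuous (sr ca + sr cb - cst al)}.
  by apply: differentiable_continuous.
have N3 : \forall x \near p, 0 < al - sr ca x + sr cb x.
  have h : 0 < (cst al - sr ca + sr cb) p by change (0 < al - sr ca p + sr cb p); rewrite sa sb; lra.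
  exact: (cvgr_gt _ K3 0 h).
have N4 : \forall x \near p, 0 < al + sr ca x - sr cb x.
  have h : 0 < (cst al + sr ca - sr cb) p by change (0 < al + sr ca p - sr cb p); rewrite sa sb; lra.
  exact: (cvgr_gt _ K4 0 h).
have N5 : \forall x \near p, 0 < sr ca x + sr cb x - al.
  have h : 0 < (sr ca + sr cb - cst al) p by change (0 < sr ca p + sr cb p - al); rewrite sa sb; lra.
  exact: (cvgr_gt _ K5 0 h).
split; first exact: LE.
split; first exact: cvf.
split; first exact: ccg.
have Df : is_diff p f (fun h => dotv u h).
  apply: (@near_is_diff _ _ f (cst al - sr ca)).
    apply: is_diff_eq (is_diffB (is_diff_cst al p) Dsa) _.
    apply/funext => h.
    change (0 - (- dotv (p - ca) h / sr ca p) = dotv u h).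
    rewrite ea sa dotvZ sub0r mulNr opprK mulrAC mulfV ?mul1r //; exact: lt0r_neq0.
  apply: filterS N3 => x h3; rewrite /f max_l //=; lra.
have Dg : is_diff p g (fun h => dotv v h).
  apply: (@near_is_diff _ _ g (cst 0 + sr cb)).
    apply: is_diff_eq (is_diffD (is_diff_cst 0 p) Dsb) _.
    apply/funext => h.
    change (0 + (- dotv (p - cb) h / sr cb p) = dotv v h).
    rewrite eb sb dotvZ dotvN add0r mulrN opprK mulrAC mulfV ?mul1r //; exact: lt0r_neq0.
  apply: filterS N4 => x h4; rewrite /g min_r //=; lra.
split.
  near=> x.
  have n1 : sq ca x < 1 by near: x; exact: N1.
  have n2 : sq cb x < 1 by near: x; exact: N2.
  have n3 : 0 < al - sr ca x + sr cb x by near: x; exact: N3.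
  have n5 : 0 < sr ca x + sr cb x - al by near: x; exact: N5.
  have s0 : 0 <= sr ca x := sqrtr_ge0 _.
  exists (row_mx x (const_mx (al - sr ca x))); last by rewrite row_mxKl.
  split; apply/ballE; rewrite row_mxKl row_mxKr mxE; split; try exact: ltW.
    apply/andP; split; lra.
  apply/andP; split; lra.
split; first by [].
split; first by [].
by split => h; rewrite diff_val.
Unshelve. all: by end_near.
Qed.
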